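(* Let $n$ be a positive integer, let $s_1,s_2,s_3>0$, and let $z\in\mathbb{R}$ (in the application $z=x_1-2x_2+x_3$ for observed cell means $x_1,x_2,x_3$). For $\rho=(\rho_1,\rho_2,\rho_3)$ put $$s^2(\rho_1,\rho_2,\rho_3)=s_1^2+4s_2^2+s_3^2-4s_1s_2\rho_3+2s_1s_3\rho_2-4s_2s_3\rho_1,$$ $s(\rho_1,\rho_2,\rho_3)=\sqrt{s^2(\rho_1,\rho_2,\rho_3)}$, and $$f_n(z;\rho_1,\rho_2,\rho_3)=\sqrt{\frac{n}{2\pi}}\,\frac{1}{s(\rho_1,\rho_2,\rho_3)}\exp\Big(-\frac{nz^2}{2s^2(\rho_1,\rho_2,\rho_3)}\Big).$$ Let $$R=\big\{(\rho_1,\rho_2,\rho_3): -1<\rho_i<1\ (i=1,2,3),\ 1-\rho_1^2-\rho_2^2-\rho_3^2+2\rho_1\rho_2\rho_3>0,\ s(\rho_1,\rho_2,\rho_3)\le s(0,0,0)\big\},$$ and define the evidential value $$\mathbb V=\frac{\sup_{(\rho_1,\rho_2,\rho_3)\in R} f_n(z;\rho_1,\rho_2,\rho_3)}{f_n(z;0,0,0)}.$$ Define $s_L^2=\inf_{(\rho_1,\rho_2,\rho_3)\in R}s^2(\rho_1,\rho_2,\rho_3)$, $\tilde s_L^2=\min\{(2s_2-(s_1+s_3))^2,\ (2s_2-\sqrt{s_1^2+s_3^2})^2\}$ with $\tilde s_L\ge 0$, and $s_0^2=s^2(0,0,0)=s_1^2+4s_2^2+s_3^2$ with $s_0>0$.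 Then $s_L^2\le \tilde s_L^2\le s_0^2$. Moreover: (i) if $\tilde s_L^2\le nz^2\le s_0^2$, then $$\mathbb V=\frac{s_0}{\sqrt{nz^2}}\exp\Big\{-\frac12 nz^2\Big[\frac1{nz^2}-\frac1{s_0^2}\Big]\Big\}\ge 1;$$ (ii) if $nz^2\le \tilde s_L^2$, then $$\mathbb V\ge \frac{s_0}{\tilde s_L}\exp\Big\{-\frac12 nz^2\Big[\frac1{\tilde s_L^2}-\frac1{s_0^2}\Big]\Big\}\ge 1,$$ and $\mathbb V$ is at most $\frac{s_0}{\sqrt{nz^2}}\exp\{-\frac12 nz^2[\frac1{nz^2}-\frac1{s_0^2}]\}$; (iii) if $s_0^2\le nz^2$, then $\mathbb V=1$.
   Context: Statistical setting (for motivation): $\sqrt n\,(X_1-2X_2+X_3)$ is modeled as normal with mean $0$ and variance $\sigma_1^2+4\sigma_2^2+\sigma_3^2-4\sigma_1\sigma_2\rho_3+2\sigma_1\sigma_3\rho_2-4\sigma_2\sigma_3\rho_1$, where $X_i$ are three cell means of $n$ observations each, $\sigma_i^2$ the cell variances and $\rho_1,\rho_2,\rho_3$ correlations between cell means; $f_n$ is this normal density of $Z=X_1-2X_2+X_3$ evaluated at $z$ with $\sigma_i$ replaced by the sample standard deviations $s_i$. The set $R$ is the set of admissible correlation parameters under the ''fabrication'' hypothesis, and $(0,0,0)$ corresponds to the independence hypothesis. *)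

(* Defs.v *)
From HB Require Import structures.
From mathcomp Require Import all_boot all_order all_algebra.
From mathcomp Require Import all_classical all_reals all_analysis.
Set Implicit Arguments. Unset Strict Implicit. Unset Printing Implicit Defensive.
Import Order.TTheory GRing.Theory Num.Theory.
Local Open Scope classical_set_scope.
Local Open Scope ring_scope.

Definition rho1 {R : realType} (r : R * R * R) : R := r.1.1.
Definition rho2 {R : realType} (r : R * R * R) : R := r.1.2.
Definition rho3 {R : realType} (r : R * R * R) : R := r.2.

Definition ssq {R : realType} (s1 s2 s3 : R) (r : R * R * R) : R :=
  s1 ^+ 2 + 4 * s2 ^+ 2 + s3 ^+ 2 - 4 * s1 * s2 * rho3 r
  + 2 * s1 * s3 * rho2 r - 4 * s2 * s3 * rho1 r.

Definition sfun {R : realType} (s1 s2 s3 : R) (r : R * R * R) : R :=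
  Num.sqrt (ssq s1 s2 s3 r).

Definition fn {R : realType} (n : nat) (s1 s2 s3 z : R) (r : R * R * R) : R :=
  Num.sqrt (n%:R / (2 * pi)) * (sfun s1 s2 s3 r)^-1
  * expR (- (n%:R * z ^+ 2) / (2 * ssq s1 s2 s3 r)).

Definition Rset {R : realType} (s1 s2 s3 : R) : set (R * R * R) :=
  [set r | [/\ -1 < rho1 r < 1, -1 < rho2 r < 1, -1 < rho3 r < 1,
     0 < 1 - rho1 r ^+ 2 - rho2 r ^+ 2 - rho3 r ^+ 2 + 2 * rho1 r * rho2 r * rho3 r
     & sfun s1 s2 s3 r <= sfun s1 s2 s3 (0, 0, 0)]].

(* evidential value V = sup_{rho in R} f_n(z;rho) / f_n(z;0,0,0), as an extended real
   (the supremum may be +oo) *)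
Definition evV {R : realType} (n : nat) (s1 s2 s3 z : R) : \bar R :=
  (ereal_sup [set (fn n s1 s2 s3 z r)%:E | r in Rset s1 s2 s3]
   * ((fn n s1 s2 s3 z (0, 0, 0))^-1)%:E)%E.

Definition sL2 {R : realType} (s1 s2 s3 : R) : R :=
  inf [set ssq s1 s2 s3 r | r in Rset s1 s2 s3].

Definition tsL2 {R : realType} (s1 s2 s3 : R) : R :=
  Num.min ((2 * s2 - (s1 + s3)) ^+ 2) ((2 * s2 - Num.sqrt (s1 ^+ 2 + s3 ^+ 2)) ^+ 2).
Definition tsL {R : realType} (s1 s2 s3 : R) : R := Num.sqrt (tsL2 s1 s2 s3).

Definition s02 {R : realType} (s1 s2 s3 : R) : R := ssq s1 s2 s3 (0, 0, 0).
Definition s0 {R : realType} (s1 s2 s3 : R) : R := Num.sqrt (s02 s1 s2 s3).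

(* a / b as an extended real, with the convention a / 0 = +oo (used for a > 0, b >= 0) *)
Definition ediv {R : realType} (a b : R) : \bar R :=
  if b == 0 then +oo%E else (a / b)%:E.

(* Main.v *)
Require Import Defs.
From HB Require Import structures.
From mathcomp Require Import all_boot all_order all_algebra.
From mathcomp Require Import all_classical all_reals all_analysis.
From mathcomp Require Import lra ring.
Import Order.TTheory GRing.Theory Num.Theory.
Local Open Scope classical_set_scope.
Local Open Scope ring_scope.

Definition G {R : realType} (a t : R) : R := (Num.sqrt t)^-1 * expR (- a / (2 * t)).

Lemma G_ge0 {R : realType} (a t : R) : 0 <= G a t.
Proof. by rewrite /G mulr_ge0 ?invr_ge0 ?sqrtr_ge0 ?expR_ge0. Qed.

Lemma G_sq {R : realType} (a t : R) : 0 < t -> G a t ^+ 2 = t^-1 * expR (- (a * t^-1)).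
Proof.
move=> ht; rewrite /G exprMn exprVn sqr_sqrtr ?ltW // -expRM_natl; congr (_ * expR _).
by field; rewrite gt_eqF.
Qed.

Lemma G_cmp {R : realType} (a t1 t2 : R) : 0 < t1 -> 0 < t2 ->
  t1^-1 * expR (- (a * t1^-1)) <= t2^-1 * expR (- (a * t2^-1)) -> G a t1 <= G a t2.
Proof.
move=> h1 h2 h; rewrite -ler_sqr ?nnegrE ?G_ge0 //.
by rewrite !G_sq.
Qed.

Lemma phi_split {R : realType} (a x1 x2 : R) :
  expR (- (a * x1)) = expR (- (a * x2)) * expR (- (a * (x1 - x2))).
Proof. by rewrite -expRD; congr expR; ring. Qed.

Lemma phi_inc {R : realType} (a x1 x2 : R) : 0 < x2 -> x2 <= x1 -> 1 <= a * x2 ->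
  x1 * expR (- (a * x1)) <= x2 * expR (- (a * x2)).
Proof.
move=> h2 h21 ha; rewrite (phi_split a x1 x2).
set P := expR (- (a * x2)); set F := expR (- (a * (x1 - x2))).
have hP : 0 < P by apply: expR_gt0.
have hF : 0 < F by apply: expR_gt0.
have hE : F * expR (a * (x1 - x2)) = 1 by rewrite /F -expRD addNr expR0.
have hb := expR_ge1Dx (a * (x1 - x2)).
have hx : x1 <= x2 * expR (a * (x1 - x2)) by nra.
have : x1 * F <= x2 by nra.
nra.
Qed.

Lemma phi_dec {R : realType} (a x1 x2 : R) : 0 < x2 -> x2 <= x1 -> a * x1 <= 1 ->
  x2 * expR (- (a * x2)) <= x1 * expR (- (a * x1)).
Proof.
move=> h2 h21 ha; rewrite (phi_split a x1 x2).
set P := expR (- (a * x2)); set F := expR (- (a * (x1 - x2))).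
have hP : 0 < P by apply: expR_gt0.
have hb := expR_ge1Dx (- (a * (x1 - x2))).
have : x2 <= x1 * F by rewrite /F; nra.
nra.
Qed.

Lemma G_inc {R : realType} (a t1 t2 : R) : 0 < t1 -> t1 <= t2 -> t2 <= a -> G a t1 <= G a t2.
Proof.
move=> h1 h12 h2a; have h2 : 0 < t2 by apply: lt_le_trans h12.
apply: G_cmp => //; apply: phi_inc.
- by rewrite invr_gt0.
- by rewrite lef_pV2 ?posrE.
- by rewrite -[a * _]/(a / t2) ler_pdivlMr // mul1r.
Qed.

Lemma G_dec {R : realType} (a t1 t2 : R) : 0 < t1 -> a <= t1 -> t1 <= t2 -> G a t2 <= G a t1.
Proof.
move=> h1 h1a h12; have h2 : 0 < t2 by apply: lt_le_trans h12.
apply: G_cmp => //; apply: phi_dec.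
- by rewrite invr_gt0.
- by rewrite lef_pV2 ?posrE.
- by rewrite -[a * _]/(a / t1) ler_pdivrMr // mul1r.
Qed.

Lemma G_max {R : realType} (a t : R) : 0 < a -> 0 < t -> G a t <= G a a.
Proof.
move=> ha ht; have [hta|hta] := leP t a.
  exact: G_inc.
by apply: G_dec => //; apply: ltW.
Qed.

Lemma G_K4 {R : realType} (a c t : R) : 0 <= a -> 0 < c -> c <= t -> G a c * (c / t) <= G a t.
Proof.
move=> ha hc hct; have ht : 0 < t by apply: lt_le_trans hct.
have hct' : 0 < c / t by rewrite divr_gt0.
have hn : 0 <= G a c * (c / t) by rewrite mulr_ge0 ?G_ge0 // ltW.
rewrite -ler_sqr ?nnegrE ?G_ge0 //.
rewrite exprMn !G_sq //.
have hx : t^-1 <= c^-1 by rewrite lef_pV2 ?posrE.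
have hx0 : 0 < t^-1 by rewrite invr_gt0.
have he : expR (- (a * c^-1)) <= expR (- (a * t^-1)).
  by rewrite ler_expR lerN2 ler_wpM2l.
have -> : (c / t) ^+ 2 = c ^+ 2 * t^-1 ^+ 2 by rewrite exprMn.
have -> : c^-1 * expR (- (a * c^-1)) * (c ^+ 2 * t^-1 ^+ 2)
   = t^-1 * (c * t^-1) * expR (- (a * c^-1)).
  by field; rewrite !gt_eqF.
have hc1 : c * t^-1 <= 1 by rewrite -[_ * _]/(c / t) ler_pdivrMr // mul1r.
have hE := expR_gt0 (- (a * c^-1)).
rewrite -mulrA ler_pM2l //.
have hy : 0 <= c * t^-1 by rewrite mulr_ge0 // ltW.
apply: le_trans he; rewrite -[X in _ <= X]mul1r ler_pM2r //.
Qed.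
Lemma sup_lb {R : realType} (M : \bar R) (L a b : R) : 0 < a -> a <= b -> 0 <= L ->
  (forall t, a < t <= b -> ((L * (a / t))%:E <= M)%E) ->
  ((L * (a / b))%:E <= M)%E -> (L%:E <= M)%E.
Proof.
move=> ha hab hL H Hb.
have [eab|nab] := eqVneq a b.
  by move: Hb; rewrite -eab divff ?gt_eqF // mulr1.
have lab : a < b by rewrite lt_neqAle nab.
case: M H Hb => [m| |] H Hb.
- rewrite lee_fin; apply/negP => /negP; rewrite -ltNge => hmL.
  have hb' : L * (a / b) <= m by rewrite -lee_fin.
  have hm0 : 0 <= m by apply: le_trans hb'; rewrite mulr_ge0 // divr_ge0 // ltW // (lt_le_trans ha).
  have hL0 : 0 < L by apply: le_lt_trans hmL.
  set d := Num.min (b - a) (a * (L - m) / (2 * L)).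
  have hd0 : 0 < d by rewrite lt_min subr_gt0 lab /= divr_gt0 ?mulr_gt0 // subr_gt0.
  have hd1 : d <= b - a by rewrite ge_min lexx.
  have hd2 : d <= a * (L - m) / (2 * L) by rewrite ge_min lexx orbT.
  have hd2' : d * (2 * L) <= a * (L - m) by rewrite -ler_pdivlMr // mulr_gt0.
  have := H (a + d); rewrite lee_fin.
  have ht : 0 < a + d by apply: addr_gt0.
  have -> : L * (a / (a + d)) = (L * a) / (a + d) by rewrite mulrA.
  rewrite ler_pdivrMr // => /(_ _) h.
  have : L * a <= m * (a + d) by apply: h; apply/andP; split; lra.
  nra.
- by rewrite leey.
- by move: Hb; rewrite leeNy_eq.
Qed.

Lemma sup_pinfty {R : realType} (M : \bar R) : (forall x : R, (x%:E <= M)%E) -> M = +oo%E.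
Proof.
case: M => [m| |] H //.
  by have := H (m + 1)%R; rewrite lee_fin => h; exfalso; lra.
by have := H 0; rewrite leeNy_eq.
Qed.

Lemma s02E {R : realType} (s1 s2 s3 : R) : s02 s1 s2 s3 = s1 ^+ 2 + 4 * s2 ^+ 2 + s3 ^+ 2.
Proof. by rewrite /s02 /ssq /rho1 /rho2 /rho3 /= !mulr0 !subr0 addr0. Qed.

Lemma Rset0 {R : realType} (s1 s2 s3 : R) : Rset s1 s2 s3 (0, 0, 0).
Proof.
rewrite /Rset /rho1 /rho2 /rho3 /=; split => //; try lra.
Qed.

Lemma range {R : realType} (s1 s2 s3 : R) : 0 < s1 -> 0 < s2 -> 0 < s3 ->
  forall t, tsL2 s1 s2 s3 < t <= s02 s1 s2 s3 ->
  exists r, Rset s1 s2 s3 r /\ ssq s1 s2 s3 r = t.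
Proof.
move=> h1 h2 h3 t /andP[hlt hts].
set q := Num.sqrt (s1 ^+ 2 + s3 ^+ 2).
have hq2 : q ^+ 2 = s1 ^+ 2 + s3 ^+ 2 by rewrite sqr_sqrtr // addr_ge0 // sqr_ge0.
have hq : 0 < q by rewrite sqrtr_gt0 addr_gt0 // exprn_gt0.
have hS := s02E s1 s2 s3.
have hS0 : 0 <= s02 s1 s2 s3 by rewrite hS; nra.
have hrs : forall r, ssq s1 s2 s3 r = t -> Defs.sfun s1 s2 s3 r <= Defs.sfun s1 s2 s3 (0, 0, 0).
  by move=> r hr; rewrite /Defs.sfun ler_sqrt; [rewrite hr; exact: hts | exact: hS0].
move: hlt; rewrite /tsL2 -/q.
have [hAB|hAB] := leP ((2 * s2 - (s1 + s3)) ^+ 2) ((2 * s2 - q) ^+ 2).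
- move=> hlt.
  set K := s02 s1 s2 s3 - (2 * s2 - (s1 + s3)) ^+ 2.
  have hK : 0 < K by rewrite /K; lra.
  set u := (s02 s1 s2 s3 - t) / K.
  have huK : u * K = s02 s1 s2 s3 - t by rewrite /u divfK // gt_eqF.
  have hu0 : 0 <= u by apply: divr_ge0; [rewrite subr_ge0 | apply: ltW].
  have hu1 : u < 1 by rewrite /u ltr_pdivrMr // mul1r /K; lra.
  have hr : ssq s1 s2 s3 (u, u, u) = t.
    rewrite /ssq /rho1 /rho2 /rho3 /=.
    have -> : s1 ^+ 2 + 4 * s2 ^+ 2 + s3 ^+ 2 - 4 * s1 * s2 * u + 2 * s1 * s3 * u - 4 * s2 * s3 * u
      = s02 s1 s2 s3 - u * K by rewrite /K hS; ring.
    by rewrite huK; ring.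
  exists (u, u, u); split => //.
  rewrite /Rset /rho1 /rho2 /rho3 /=; split; try (apply/andP; split; lra).
    have -> : 1 - u ^+ 2 - u ^+ 2 - u ^+ 2 + 2 * u * u * u = (1 - u) ^+ 2 * (1 + 2 * u) by ring.
    by rewrite mulr_gt0 ?exprn_gt0 //; lra.
  exact: hrs.
- move=> hlt.
  set K := 4 * s2 * q.
  have hK : 0 < K by rewrite /K !mulr_gt0.
  have hKe : K = s02 s1 s2 s3 - (2 * s2 - q) ^+ 2.
    rewrite hS /K (_ : s1 ^+ 2 + 4 * s2 ^+ 2 + s3 ^+ 2 = q ^+ 2 + 4 * s2 ^+ 2); [ring | rewrite hq2; ring].
  set u := (s02 s1 s2 s3 - t) / K.
  have huK : u * K = s02 s1 s2 s3 - t by rewrite /u divfK // gt_eqF.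
  have hu0 : 0 <= u by apply: divr_ge0; [rewrite subr_ge0 | apply: ltW].
  have hu1 : u < 1 by rewrite /u ltr_pdivrMr // mul1r hKe; lra.
  set v := s3 / q. set w := s1 / q.
  have hv0 : 0 < v by rewrite divr_gt0.
  have hw0 : 0 < w by rewrite divr_gt0.
  have hvw : v ^+ 2 + w ^+ 2 = 1.
    rewrite /v /w !expr_div_n addrC -mulrDl -hq2 divff // gt_eqF // exprn_gt0 //.
  have hv1 : v < 1 by nra.
  have hw1 : w < 1 by nra.
  have hr : ssq s1 s2 s3 (u * v, 0, u * w) = t.
    rewrite /ssq /rho1 /rho2 /rho3 /=.
    have -> : s1 ^+ 2 + 4 * s2 ^+ 2 + s3 ^+ 2 - 4 * s1 * s2 * (u * w) + 2 * s1 * s3 * 0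
       - 4 * s2 * s3 * (u * v) = s02 s1 s2 s3 - u * K.
      have hqn : q != 0 by rewrite gt_eqF.
      have e1 : 4 * s1 * s2 * (u * w) + 4 * s2 * s3 * (u * v) = u * K.
        rewrite /K /v /w (_ : 4 * s1 * s2 * (u * (s1 / q)) + 4 * s2 * s3 * (u * (s3 / q))
          = 4 * s2 * u * (s1 ^+ 2 + s3 ^+ 2) / q); last by field.
        by rewrite -hq2; field.
      rewrite hS; lra.
    by rewrite huK; ring.
  exists (u * v, 0, u * w); split => //.
  rewrite /Rset /rho1 /rho2 /rho3 /=; split; try (apply/andP; split; nra).
    have -> : 1 - (u * v) ^+ 2 - 0 ^+ 2 - (u * w) ^+ 2 + 2 * (u * v) * 0 * (u * w)
      = 1 - u ^+ 2 * (v ^+ 2 + w ^+ 2) by ring.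
    rewrite hvw mulr1; nra.
  exact: hrs.
Qed.

Lemma fnE {R : realType} (n : nat) (s1 s2 s3 z : R) r :
  fn n s1 s2 s3 z r = Num.sqrt (n%:R / (2 * pi)) * G (n%:R * z ^+ 2) (ssq s1 s2 s3 r).
Proof. by rewrite /fn /G /Defs.sfun; symmetry; apply: mulrA. Qed.

Lemma G_nonpos {R : realType} (a t : R) : t <= 0 -> G a t = 0.
Proof. by move=> ht; rewrite /G ler0_sqrtr // invr0 mul0r. Qed.

Lemma G_pos {R : realType} (a t : R) : 0 < t -> 0 < G a t.
Proof. by move=> ht; rewrite /G mulr_gt0 ?invr_gt0 ?sqrtr_gt0 ?expR_gt0. Qed.

Lemma ratio {R : realType} (a C c s : R) : 0 < C -> 0 < c -> 0 < s ->
  C * G a c / (C * G a s) = Num.sqrt s / Num.sqrt c * expR (- (1 / 2) * a * (c^-1 - s^-1)).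
Proof.
move=> hC hc hs.
rewrite (_ : - (1 / 2) * a * (c^-1 - s^-1) = - a / (2 * c) + - (- a / (2 * s))); last first.
  by field; rewrite !gt_eqF.
rewrite expRD expRN /G.
have := sqrtr_gt0 c; rewrite hc => hsc.
have := sqrtr_gt0 s; rewrite hs => hss.
have hE := expR_gt0 (- a / (2 * s)).
by field; rewrite !gt_eqF.
Qed.

Theorem theorem1 (R : realType) (n : nat) (s1 s2 s3 z : R) :
  (0 < n)%N -> 0 < s1 -> 0 < s2 -> 0 < s3 ->
  let nz2 := n%:R * z ^+ 2 in
  let S0 := s0 s1 s2 s3 in
  let S02 := s02 s1 s2 s3 in
  let T2 := tsL2 s1 s2 s3 in
  let T := tsL s1 s2 s3 in
  let V := evV n s1 s2 s3 z in
  [/\ sL2 s1 s2 s3 <= T2 /\ T2 <= S02,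
      (T2 <= nz2 <= S02 ->
         V = (ediv S0 (Num.sqrt nz2)
               * (expR (- (1 / 2) * nz2 * (nz2^-1 - S02^-1)))%:E)%E
         /\ (1 <= V)%E),
      (nz2 <= T2 ->
         [/\ ((ediv S0 T * (expR (- (1 / 2) * nz2 * (T2^-1 - S02^-1)))%:E) <= V)%E,
             (1 <= ediv S0 T * (expR (- (1 / 2) * nz2 * (T2^-1 - S02^-1)))%:E)%E
           & (V <= ediv S0 (Num.sqrt nz2)
                   * (expR (- (1 / 2) * nz2 * (nz2^-1 - S02^-1)))%:E)%E])
    & (S02 <= nz2 -> V = 1%E)].
Proof.
move=> hn h1 h2 h3 nz2 S0 S02 T2 T V.
pose C := Num.sqrt (n%:R / (2 * pi) : R).
have hC : 0 < C by rewrite sqrtr_gt0 divr_gt0 ?ltr0n // mulr_gt0 // pi_gt0.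
have hfn : forall r, fn n s1 s2 s3 z r = C * G nz2 (ssq s1 s2 s3 r) := fun r => fnE n s1 s2 s3 z r.
have ha : 0 <= nz2 by rewrite /nz2 mulr_ge0 ?ler0n ?sqr_ge0.
have hS : S02 = s1 ^+ 2 + 4 * s2 ^+ 2 + s3 ^+ 2 := s02E s1 s2 s3.
have hS02 : 0 < S02.
  have := exprn_gt0 2 h1; have := exprn_gt0 2 h2; have := exprn_gt0 2 h3; rewrite hS; lra.
set q := Num.sqrt (s1 ^+ 2 + s3 ^+ 2).
have hq2 : q ^+ 2 = s1 ^+ 2 + s3 ^+ 2 by rewrite sqr_sqrtr // addr_ge0 // sqr_ge0.
have hq : 0 < q by rewrite sqrtr_gt0 addr_gt0 // exprn_gt0.
have hT2 : 0 <= T2 by rewrite /T2 /tsL2 le_min !sqr_ge0.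
have hTS : T2 <= S02.
  rewrite /T2 /tsL2 ge_min -/q; apply/orP; right; rewrite hS; nra.
have hrange : forall t, T2 < t <= S02 \/ t = S02 -> exists r, Rset s1 s2 s3 r /\ ssq s1 s2 s3 r = t.
  move=> t [ht|->]; first exact: range.
  by exists (0, 0, 0); split; [exact: Rset0|].
set Sup := ereal_sup [set (fn n s1 s2 s3 z r)%:E | r in Rset s1 s2 s3].
set g0 := C * G nz2 S02.
have hg0 : 0 < g0 by rewrite mulr_gt0 // G_pos.
have hV : V = (Sup * (g0^-1)%:E)%E by rewrite /V /evV hfn; reflexivity.
have hlow : forall t, T2 < t <= S02 \/ t = S02 -> ((C * G nz2 t)%:E <= Sup)%E.
  move=> t /hrange [r [hr <-]]; apply: ereal_sup_ubound; exists r => //; by rewrite hfn.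
have hup : forall U, (forall t, 0 < t -> t <= S02 -> C * G nz2 t <= U) -> 0 <= U -> (Sup <= U%:E)%E.
  move=> U H hU; apply: ge_ereal_sup => _ [r hr <-]; rewrite lee_fin hfn.
  have [hp|hp] := leP (ssq s1 s2 s3 r) 0; first by rewrite G_nonpos // mulr0.
  apply: H => //; case: hr => _ _ _ _; rewrite /Defs.sfun ler_sqrt //; exact: ltW.
have hclow : forall c, T2 <= c -> c <= S02 -> 0 < c -> ((C * G nz2 c)%:E <= Sup)%E.
  move=> c hc1 hc2 hc0; apply: (@sup_lb _ _ _ c S02) => //.
  - by rewrite mulr_ge0 ?G_ge0 // ltW.
  - move=> t /andP[ht1 ht2]; apply: le_trans (hlow t _); last by left; rewrite ht2 (le_lt_trans hc1 ht1).
    by rewrite lee_fin -mulrA ler_pM2l // G_K4 // ltW.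
  - apply: le_trans (hlow S02 _); last by right.
    by rewrite lee_fin -mulrA ler_pM2l // G_K4.
have hinf : nz2 = 0 -> T2 = 0 -> Sup = +oo%E.
  move=> hz hT0; apply: sup_pinfty => x.
  set M := `|x| + 1.
  have hM : 0 < M by rewrite /M ltr_pwDr // normr_ge0.
  set t := Num.min S02 ((C / M) ^+ 2).
  have ht0 : 0 < t by rewrite lt_min hS02 exprn_gt0 // divr_gt0.
  have htS : t <= S02 by rewrite ge_min lexx.
  apply: le_trans (hlow t _); last by left; rewrite hT0 ht0 htS.
  rewrite lee_fin /G hz oppr0 mul0r expR0 mulr1.
  have hst : Num.sqrt t <= C / M.
    have hCM : 0 <= C / M by rewrite divr_ge0 // ltW.
    rewrite -(ger0_norm hCM) -sqrtr_sqr ler_sqrt ?sqr_ge0 //.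
    by rewrite ge_min lexx orbT.
  have hst0 : 0 < Num.sqrt t by rewrite sqrtr_gt0.
  have : (C / M)^-1 <= (Num.sqrt t)^-1 by rewrite lef_pV2 ?posrE ?divr_gt0.
  rewrite invf_div => hi.
  have : C * (M / C) <= C * (Num.sqrt t)^-1 by rewrite ler_pM2l.
  rewrite mulrC divfK ?gt_eqF // => hh.
  apply: le_trans hh; rewrite /M; have := ler_norm x; lra.
have hVinf : Sup = +oo%E -> V = +oo%E.
  by move=> hs; rewrite hV hs gt0_mulye // lte_fin invr_gt0.
have hVfin : forall Y, Sup = Y%:E -> V = (Y / g0)%:E.
  by move=> Y hs; rewrite hV hs -EFinM.
have hVle : forall Y, (Sup <= Y%:E)%E -> (V <= (Y / g0)%:E)%E.
  move=> Y hs; rewrite hV EFinM; apply: lee_wpmul2r => //.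
  by rewrite lee_fin invr_ge0 ltW.
have hVge : forall Y, (Y%:E <= Sup)%E -> ((Y / g0)%:E <= V)%E.
  move=> Y hs; rewrite hV EFinM; apply: lee_wpmul2r => //.
  by rewrite lee_fin invr_ge0 ltW.
have hedivpos : forall x y : R, 0 < y -> ediv x y = (x / y)%:E.
  by move=> x y hy; rewrite /ediv gt_eqF.
have hediv0 : forall x : R, ediv x 0 = +oo%E by move=> x; rewrite /ediv eqxx.
have hrat : forall c, 0 < c -> C * G nz2 c / g0
   = S0 / Num.sqrt c * expR (- (1 / 2) * nz2 * (c^-1 - S02^-1)).
  by move=> c hc; rewrite /g0 ratio.
have hinfE : forall e : R, (+oo * (expR e)%:E)%E = +oo%E.
  by move=> e; rewrite gt0_mulye // lte_fin expR_gt0.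
split.
- split => //.
  rewrite /sL2.
  set E := [set ssq s1 s2 s3 r | r in Rset s1 s2 s3].
  have hlb : has_lbound E.
    exists (S02 - 4 * s1 * s2 - 2 * s1 * s3 - 4 * s2 * s3) => _ [r hr <-].
    case: hr => /andP[a1 a2] /andP[b1 b2] /andP[c1 c2] _ _.
    rewrite hS /ssq.
    have p1 := mulr_gt0 h1 h2; have p2 := mulr_gt0 h1 h3; have p3 := mulr_gt0 h2 h3.
    have q1 : 0 <= s1 * s2 * (1 - rho3 r) by rewrite mulr_ge0 ?ltW // subr_gt0.
    have q2 : 0 <= s1 * s3 * (1 + rho2 r) by rewrite mulr_ge0 ?ltW //; lra.
    have q3 : 0 <= s2 * s3 * (1 - rho1 r) by rewrite mulr_ge0 ?ltW // subr_gt0.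
    nra.
  have [hle|hlt] := leP (inf E) T2; first by [].
  exfalso.
  set e := (inf E - T2) / 2.
  have he : 0 < e by rewrite divr_gt0 // subr_gt0.
  have [y [hy hye]] : exists y, E y /\ y <= T2 + e.
    have [hTl|hTe] := ltP T2 S02.
      have hmin : T2 < Num.min S02 (T2 + e) <= S02.
        by rewrite lt_min hTl ltrDl he ge_min lexx.
      have [r [hr hrt]] := hrange _ (or_introl hmin).
      exists (Num.min S02 (T2 + e)); split; first by exists r.
      by rewrite ge_min lexx orbT.
    exists S02; split; first by exists (0, 0, 0); [exact: Rset0|].
    have -> : S02 = T2 by apply/le_anti; rewrite hTe hTS.
    by rewrite lerDl ltW.
  have := ge_inf hlb hy.
  rewrite /e in hye; lra.
- move=> /andP[hTa haS].
  have [hz|hz] := eqVneq nz2 0.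
    have hT0 : T2 = 0 by apply/le_anti; rewrite hT2 -hz hTa.
    rewrite hVinf ?hinf // hz sqrtr0 hediv0 hinfE; split => //; exact: leey.
  have ha0 : 0 < nz2 by rewrite lt_neqAle eq_sym hz ha.
  have hSup : Sup = (C * G nz2 nz2)%:E.
    apply/le_anti/andP; split; last exact: hclow.
    apply: hup; last by rewrite mulr_ge0 ?G_ge0 // ltW.
    by move=> t ht _; rewrite ler_pM2l // G_max.
  rewrite (hVfin _ hSup) hrat // hedivpos ?sqrtr_gt0 // -EFinM; split => //.
  rewrite lee_fin -hrat // ler_pdivlMr // mul1r ler_pM2l // G_max //.
- move=> haT.
  have [hT0|hT0] := eqVneq T2 0.
    have hz : nz2 = 0 by apply/le_anti; rewrite ha -hT0 haT.
    have hTz : T = 0 by rewrite /T /tsL -/T2 hT0 sqrtr0.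
    rewrite hTz hediv0 hinfE hz sqrtr0 hediv0 hinfE hVinf ?hinf //; split => //; exact: leey.
  have hTp : 0 < T2 by rewrite lt_neqAle eq_sym hT0 hT2.
  have hTs : T = Num.sqrt T2 by [].
  rewrite hTs hedivpos ?sqrtr_gt0 // -EFinM -hrat //; split.
  + by apply: hVge; apply: hclow.
  + rewrite lee_fin ler_pdivlMr // mul1r ler_pM2l // G_dec //.
  + have [hz|hz] := eqVneq nz2 0.
      by rewrite hz sqrtr0 hediv0 hinfE leey.
    have ha0 : 0 < nz2 by rewrite lt_neqAle eq_sym hz ha.
    rewrite hedivpos ?sqrtr_gt0 // -EFinM -hrat //.
    apply: hVle; apply: hup; last by rewrite mulr_ge0 ?G_ge0 // ltW.
    by move=> t ht _; rewrite ler_pM2l // G_max.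
- move=> hSa.
  have hSup : Sup = g0%:E.
    apply/le_anti/andP; split; last by apply: hlow; right.
    apply: hup; last exact: ltW.
    move=> t ht htS; rewrite ler_pM2l // G_inc //; exact: le_trans hSa.
  by rewrite (hVfin _ hSup) divff // gt_eqF.
Qed.
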